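(* For $R=\mathbb{Z}_{25}$ and for $R=\mathbb{S}_5=\mathbb{F}_5[X]/(X^2)$ there exist projective arcs with parameters $(425,18)$ and $(455,19)$ in $\mathrm{PHG}(2,R)$.
   Context: For a finite chain ring $R$ of length $2$ with residue field $\mathbb{F}_q$, the projective Hjelmslev plane $\mathrm{PHG}(2,R)$ is the incidence structure whose points are the free rank-$1$ submodules of the right module $R_R^3$, whose lines are the free rank-$2$ submodules of $R_R^3$, with incidence given by inclusion. A projective $(k,n)$-arc is a set of $k$ points meeting every line in at most $n$ points. *)

(* Defs.v *)
From HB Require Import structures.
From mathcomp Require Import all_boot all_order all_algebra.
From mathcomp Require Import ring.
Set Implicit Arguments. Unset Strict Implicit. Unset Printing Implicit Defensive.
Import GRing.Theory.
Local Open Scope ring_scope.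

(* ---------- The dual numbers F[X]/(X^2), represented as a + bX ~ (a,b) ---- *)
Definition dual (F : Type) : Type := (F * F)%type.
HB.instance Definition _ (F : finType) := Finite.copy (dual F) (F * F)%type.
HB.instance Definition _ (F : zmodType) := GRing.Zmodule.copy (dual F) (F * F)%type.

Section Dual.
Variable F : comNzRingType.
Definition dual_one : dual F := (1, 0).
Definition dual_mul (x y : dual F) : dual F :=
  (x.1 * y.1, x.1 * y.2 + x.2 * y.1).
Fact dual_mulA : associative dual_mul.
Proof. by move=> [a b] [c d] [e f]; rewrite /dual_mul /=; congr pair; ring. Qed.
Fact dual_mulC : commutative dual_mul.
Proof. by move=> [a b] [c d]; rewrite /dual_mul /=; congr pair; ring. Qed.
Fact dual_mul1 : left_id dual_one dual_mul.
Proof. by move=> [a b]; rewrite /dual_mul /= mul1r mul0r mul1r addr0. Qed.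
Fact dual_mulDl : left_distributive dual_mul +%R.
Proof.
move=> [a b] [c d] [e f]; rewrite /dual_mul /=.
transitivity ((a * e + c * e, (a * f + b * e) + (c * f + d * e)) : dual F); last by [].
by congr pair; ring.
Qed.
Fact dual_one_neq0 : dual_one != 0.
Proof. by apply/negP=> /eqP[] /eqP; rewrite oner_eq0. Qed.
HB.instance Definition _ := GRing.Zmodule_isComNzRing.Build (dual F)
  dual_mulA dual_mulC dual_mul1 dual_mulDl dual_one_neq0.
End Dual.

Section DualFin.
Variable F : finComNzRingType.
HB.instance Definition _ := GRing.ComNzRing.on (dual F).
End DualFin.

Definition S5 : finComNzRingType := dual 'F_5.
Definition Z25 : finComNzRingType := 'Z_25.

Definition free_submod_rank (R : finComNzRingType) (k : nat)
    (S : {set 'rV[R]_3}) : Prop :=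
  exists B : 'M[R]_(k, 3),
    injective (fun c : 'rV[R]_k => c *m B) /\ S = [set c *m B | c : 'rV[R]_k].

Definition PHG_point (R : finComNzRingType) (S : {set 'rV[R]_3}) : Prop :=
  free_submod_rank 1 S.
Definition PHG_line (R : finComNzRingType) (S : {set 'rV[R]_3}) : Prop :=
  free_submod_rank 2 S.

(* A projective (k,n)-arc: a set of k points meeting every line (incidence =
   inclusion) in at most n points. *)
Definition proj_arc (R : finComNzRingType) (A : {set {set 'rV[R]_3}})
    (k n : nat) : Prop :=
  [/\ (forall p, p \in A -> PHG_point p),
      #|A| = k &
      (forall L : {set 'rV[R]_3}, PHG_line L ->
         #|[set p in A | p \subset L]| <= n)%N].

(* Main.v *)
Require Import Defs.
From mathcomp Require Import all_boot all_order all_algebra.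
From mathcomp Require Import ring zify.
Set Implicit Arguments. Unset Strict Implicit. Unset Printing Implicit Defensive.
Import GRing.Theory.

Section Gen.
Variable R : finComNzRingType.
Local Open Scope ring_scope.

Definition tri := (R * R * R)%type.
Definition coord (v : tri) (k : 'I_3) : R :=
  match val k with 0 => v.1.1 | 1 => v.1.2 | _ => v.2 end.
Definition rv (v : tri) : 'rV[R]_3 := \row_k coord v k.
Definition pt (v : tri) : {set 'rV[R]_3} := [set c *m rv v | c : 'rV[R]_1].
Definition dot (v n : tri) : R := v.1.1 * n.1.1 + v.1.2 * n.1.2 + v.2 * n.2.
Definition scl (c : R) (v : tri) : tri := (c * v.1.1, c * v.1.2, c * v.2).

Definition i0 : 'I_3 := ord0.
Definition i1 : 'I_3 := @Ordinal 3 1 isT.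
Definition i2 : 'I_3 := @Ordinal 3 2 isT.
Definition j0 : 'I_2 := ord0.
Definition j1 : 'I_2 := @Ordinal 2 1 isT.

Lemma tri_eq (v w : tri) : (forall k, coord v k = coord w k) -> v = w.
Proof.
case: v => [[a b] c]; case: w => [[a' b'] c'] H.
by move: (H i0) (H i1) (H i2); rewrite /coord /= => -> -> ->.
Qed.

Lemma sum2 (F : 'I_2 -> R) : \sum_(j < 2) F j = F j0 + F j1.
Proof.
rewrite big_ord_recr big_ord1 /=; congr (F _ + F _); exact: val_inj.
Qed.

Lemma mul1E (c : 'rV[R]_1) (M : 'M[R]_(1,3)) k : (c *m M) 0 k = c 0 0 * M 0 k.
Proof. by rewrite !mxE big_ord1. Qed.

Lemma mul2E (c : 'rV[R]_2) (M : 'M[R]_(2,3)) k :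
  (c *m M) 0 k = c 0 j0 * M j0 k + c 0 j1 * M j1 k.
Proof. by rewrite !mxE sum2. Qed.

Variable els : seq R.
Hypothesis els_all : forall x : R, x \in els.
Variable t : R.

Definition local_chk :=
  (t != 0) && all (fun x => has (fun y => x * y == 1) els || (t * x == 0)) els.
Definition pts_chk (Vs : seq tri) :=
  all (fun v => has (fun y => (v.1.1 * y == 1) || (v.1.2 * y == 1) || (v.2 * y == 1)) els) Vs.
Fixpoint dist_chk (Vs : seq tri) :=
  if Vs is v :: s then
    all (fun w => all (fun c => ~~ [&& c * v.1.1 == w.1.1, c * v.1.2 == w.1.2 & c * v.2 == w.2]) els) s
    && dist_chk s
  else true.
Definition cnt (Vs : seq tri) (n : tri) := count (fun v => dot v n == 0) Vs.
Definition lines_chk (Vs : seq tri) (N : nat) :=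
  all (fun a => all (fun b =>
    if (cnt Vs ((1%R : R), a, b) <= N)%N then
      if t * a == 0 then
        if (cnt Vs (a, (1%R : R), b) <= N)%N then
          if t * b == 0 then (cnt Vs (a, b, (1%R : R)) <= N)%N else true
        else false
      else true
    else false) els) els.

Hypothesis Hloc : local_chk.

Lemma t_neq0 : t != 0.
Proof. by case/andP: Hloc. Qed.

Lemma loc x : (exists y, x * y = 1) \/ t * x = 0.
Proof.
case/andP: Hloc => _ /allP /(_ x (els_all x)) /orP [/hasP [y _ /eqP] | /eqP]; by [left; exists y | right].
Qed.

Lemma unit_t x y : x * y = 1 -> t * x != 0.
Proof.
move=> Hxy; apply/eqP => Htx; move/eqP: t_neq0; apply.
by rewrite -[t]mulr1 -Hxy mulrA Htx mul0r.
Qed.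

Lemma pt_point v : (exists j y, coord v j * y = 1) -> PHG_point (pt v).
Proof.
move=> [j [y Hy]]; exists (rv v); split => // c c' /matrixP /(_ 0 j).
rewrite !mul1E !mxE => Hc; apply/rowP => i; rewrite (ord1 i).
by rewrite -[c 0 0]mulr1 -[c' 0 0]mulr1 -Hy !mulrA Hc.
Qed.

Lemma in_pt v : rv v \in pt v.
Proof. by apply/imsetP; exists 1%:M => //; rewrite mul1mx. Qed.

Lemma pt_scl v w : rv w \in pt v -> exists c, w = scl c v.
Proof.
case/imsetP => c _ /rowP Hc; exists (c 0 0); apply: tri_eq => k.
have := Hc k; rewrite mul1E !mxE => ->.
by case: k => [[|[|[|k]]] Hk].
Qed.

Lemma dist_ok Vs : dist_chk Vs -> uniq Vs /\ {in Vs &, injective pt}.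
Proof.
elim: Vs => [|v s IH] //= /andP [Hv /IH [Hu Hi]].
have Hne : forall w, w \in s -> pt v <> pt w.
  move=> w ws Heq.
  have := in_pt w; rewrite -Heq => /pt_scl [c Hc].
  move/allP: Hv => /(_ w ws) /allP /(_ c (els_all c)).
  by rewrite Hc /= !eqxx.
split.
  rewrite Hu andbT; apply/negP => vs; exact: (Hne v vs).
move=> x y; rewrite !inE => /orP [/eqP -> | xs] /orP [/eqP -> | ys] //.
- by move=> /(Hne _ ys).
- by move=> /esym /(Hne _ xs).
- exact: Hi.
Qed.


Definition nrm (v : tri) : bool :=
  [|| v.1.1 == 1, (t * v.1.1 == 0) && (v.1.2 == 1)
    | [&& t * v.1.1 == 0, t * v.1.2 == 0 & v.2 == 1]].

Lemma L1 c x : c * x = 1 -> t * x = 0 -> False.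
Proof.
move=> H1 H2; move/eqP: t_neq0; apply.
by rewrite -[t]mulr1 -H1 mulrCA H2 mulr0.
Qed.

Lemma L2 c x : t * c = 0 -> c * x = 1 -> False.
Proof.
move=> H1 H2; move/eqP: t_neq0; apply.
by rewrite -[t]mulr1 -H2 mulrA H1 mul0r.
Qed.

Lemma scl1 v : scl 1 v = v.
Proof. by case: v => [[a b] c]; rewrite /scl /= !mul1r. Qed.

Lemma nrm_inj v w c : nrm v -> nrm w -> w = scl c v -> w = v.
Proof.
case: v => [[a b] d]; case: w => [[a' b'] d'] /=.
rewrite /nrm /= => Hv Hw [Ea Eb Ed].
have Hc1 : c = 1 -> (a', b', d') = (a, b, d).
  by move=> Ec; rewrite Ea Eb Ed Ec !mul1r.
case/or3P: Hv => [/eqP Hv | /andP [/eqP Hta /eqP Hv] | /and3P [/eqP Hta /eqP Htb /eqP Hv]];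
case/or3P: Hw => [/eqP Hw | /andP [/eqP Hta' /eqP Hw] | /and3P [/eqP Hta' /eqP Htb' /eqP Hw]].
- by apply: Hc1; rewrite -Hw Ea Hv mulr1.
- by exfalso; apply: (@L2 c b); [rewrite -(mulr1 c) -Hv -Ea | rewrite -Eb].
- by exfalso; apply: (@L2 c d); [rewrite -(mulr1 c) -Hv -Ea | rewrite -Ed].
- by exfalso; apply: (@L1 c a); [rewrite -Ea | ].
- by apply: Hc1; rewrite -Hw Eb Hv mulr1.
- by exfalso; apply: (@L2 c d); [rewrite -(mulr1 c) -Hv -Eb | rewrite -Ed].
- by exfalso; apply: (@L1 c a); [rewrite -Ea | ].
- by exfalso; apply: (@L1 c b); [rewrite -Eb | ].
- by apply: Hc1; rewrite -Hw Ed Hv mulr1.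
Qed.

Lemma dist_ok2 Vs : uniq Vs -> all nrm Vs -> uniq Vs /\ {in Vs &, injective pt}.
Proof.
move=> Hu /allP Hn; split => // v w vV wV Heq.
have := in_pt w; rewrite -Heq => /pt_scl [c Hc].
by apply/esym/(nrm_inj (Hn v vV) (Hn w wV) Hc).
Qed.

Lemma ord3P (P : 'I_3 -> Prop) : P i0 -> P i1 -> P i2 -> forall k, P k.
Proof.
move=> H0 H1 H2 [[|[|[|k]]] Hk] //.
- by have -> : Ordinal Hk = i0 by apply: val_inj.
- by have -> : Ordinal Hk = i1 by apply: val_inj.
- by have -> : Ordinal Hk = i2 by apply: val_inj.
Qed.

Definition crs (B : 'M[R]_(2,3)) : tri :=
  (B j0 i1 * B j1 i2 - B j0 i2 * B j1 i1,
   B j0 i2 * B j1 i0 - B j0 i0 * B j1 i2,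
   B j0 i0 * B j1 i1 - B j0 i1 * B j1 i0).

Lemma minor_zero B : (forall k, t * coord (crs B) k = 0) ->
  forall j k, t * (B j0 j * B j1 k - B j0 k * B j1 j) = 0.
Proof.
move=> H; have H0 := H i0; have H1 := H i1; have H2 := H i2; rewrite /= in H0 H1 H2.
apply: ord3P; apply: ord3P;
  first [ by rewrite subrr mulr0 | exact: H0 | exact: H1 | exact: H2
        | by rewrite -opprB mulrN H0 oppr0 | by rewrite -opprB mulrN H1 oppr0
        | by rewrite -opprB mulrN H2 oppr0 ].
Qed.

Definition mk2 (a b : R) : 'rV[R]_2 := \row_(j < 2) if val j == 0%N then a else b.

Lemma crs_unit B : injective (fun c : 'rV[R]_2 => c *m B) ->
  exists j y, coord (crs B) j * y = 1.
Proof.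
move=> Hinj.
case: (boolP [forall k, t * coord (crs B) k == 0]) => [/forallP Hall | /forallPn [k /eqP Hk]]; last first.
  by case: (loc (coord (crs B) k)) => // [[y Hy]]; exists k, y.
exfalso.
have H k : t * coord (crs B) k = 0 by apply/eqP.
have Hm := minor_zero H.
case: (boolP [exists j, [exists y, (B j0 j * y == 1) || (B j1 j * y == 1)]]).
- case/existsP => j /existsP [y Hy].
  have : mk2 (t * - B j1 j) (t * B j0 j) *m B = 0 *m B.
    apply/rowP => k; rewrite mul2E mul0mx !mxE /=.
    rewrite -(Hm j k); ring.
  move/Hinj => /rowP Hc.
  case/orP: Hy => /eqP Hy.
  + have := Hc j1; rewrite !mxE /= => /eqP; apply/negP; exact: unit_t Hy.
  + have := Hc j0; rewrite !mxE /= => /eqP; rewrite mulrN oppr_eq0; apply/negP; exact: unit_t Hy.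
- move=> Hno.
  have Hz r k : t * B r k = 0.
    case: (loc (B r k)) => // [[y Hy]]; exfalso; move/negP: Hno; apply.
    apply/existsP; exists k; apply/existsP; exists y.
    have : (r == j0) || (r == j1) by case: (r) => [[|[|r0]] Hr] //.
    by case/orP => /eqP Er; rewrite -Er Hy eqxx ?orbT.
  have : mk2 t 0 *m B = 0 *m B.
    apply/rowP => k; rewrite mul2E mul0mx !mxE /= Hz mul0r addr0 //.
  move/Hinj => /rowP /(_ j0); rewrite !mxE /= => /eqP; apply/negP; exact: t_neq0.
Qed.

Lemma coord_scl y n k : coord (scl y n) k = y * coord n k.
Proof. by case: k => [[|[|[|k]]] Hk]. Qed.

Lemma dot_scl y v n : dot v (scl y n) = y * dot v n.
Proof. rewrite /dot /scl /=; ring. Qed.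

Lemma dot_crs (B : 'M[R]_(2,3)) (c : 'rV[R]_2) v :
  rv v = c *m B -> dot v (crs B) = 0.
Proof.
move/rowP => Hv.
have E0 := Hv i0; have E1 := Hv i1; have E2 := Hv i2.
rewrite !mul2E !mxE /coord /= in E0 E1 E2.
rewrite /dot /crs /= E0 E1 E2; ring.
Qed.

Lemma norm_line n : (exists j y, coord n j * y = 1) -> exists y,
  (scl y n).1.1 = 1 \/ (t * (scl y n).1.1 = 0 /\ (scl y n).1.2 = 1) \/
  (t * (scl y n).1.1 = 0 /\ t * (scl y n).1.2 = 0 /\ (scl y n).2 = 1).
Proof.
move=> [j [y Hy]]; case: n Hy => [[a b] d] Hy.
case: (loc a) => [[y0 H0] | Ha]; first by exists y0; left; rewrite /= mulrC.
case: (loc b) => [[y1 H1] | Hb].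
  by exists y1; right; left; rewrite /= mulrCA Ha mulr0 mulrC.
case: (loc d) => [[y2 H2] | Hd].
  by exists y2; right; right; rewrite /= mulrCA Ha mulr0 mulrCA Hb mulr0 mulrC.
exfalso; move: Hy; case: j => [[|[|[|j]]] Hj] //= Hy.
- by rewrite mulrC in Hy; apply: (L1 Hy).
- by rewrite mulrC in Hy; apply: (L1 Hy).
- by rewrite mulrC in Hy; apply: (L1 Hy).
Qed.

Definition ncond (n : tri) := n.1.1 = 1 \/ (t * n.1.1 = 0 /\ n.1.2 = 1) \/
  (t * n.1.1 = 0 /\ t * n.1.2 = 0 /\ n.2 = 1).

Lemma arc_main Vs N : (forall v, v \in Vs -> exists j y, coord v j * y = 1) ->
  uniq Vs -> all nrm Vs -> (forall n, ncond n -> (cnt Vs n <= N)%N) ->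
  exists A, @proj_arc R A (size Vs) N.
Proof.
move=> Hp Hu0 Hn Hl; case: (dist_ok2 Hu0 Hn) => Hu Hi.
exists [set pt v | v in Vs]; split.
- move=> p /imsetP [v vVs ->]; apply: pt_point; exact: Hp.
- by rewrite card_in_imset //; apply/card_uniqP.
- move=> L [B [Hinj ->]].
  case: (norm_line (crs_unit Hinj)) => y Hnorm.
  pose n' := scl y (crs B).
  apply: (@leq_trans #|[set pt v | v in [seq v <- Vs | dot v n' == 0]]|).
    apply: subset_leq_card; apply/subsetP => p; rewrite inE => /andP [/imsetP [v vVs ->] Hsub].
    apply/imsetP; exists v => //; rewrite mem_filter vVs andbT.
    have := subsetP Hsub _ (in_pt v) => /imsetP [c _ Hc].
    by rewrite /n' dot_scl (dot_crs Hc) mulr0.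
  apply: (leq_trans (leq_imset_card _ _)); apply: (leq_trans (card_size _)).
  rewrite size_filter; exact: Hl.
Qed.
End Gen.

Section Codes.
Variable R : finComNzRingType.
Local Open Scope ring_scope.
Variable phi : nat -> R.
Variables addc mulc : nat -> nat -> nat.
Variables oc tc : nat.
Definition cds := iota 0 25.
Definition ops_chk := all (fun a => all (fun b =>
  [&& (addc a b < 25)%N, (mulc a b < 25)%N, phi (addc a b) == phi a + phi b
    & phi (mulc a b) == phi a * phi b]) cds) cds.
Definition inj_chk := all (fun a => all (fun b => (phi a == phi b) ==> (a == b)) cds) cds.
Definition cst_chk := [&& phi 0 == 0, phi oc == 1, (oc < 25)%N & (tc < 25)%N].
Hypothesis Hops : ops_chk.
Hypothesis Hinj : inj_chk.
Hypothesis Hcst : cst_chk.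
Hypothesis phi_surj : forall x : R, exists2 a, (a < 25)%N & phi a = x.

Let inr a : (a < 25)%N -> a \in cds. Proof. by rewrite mem_iota. Qed.

Lemma phiD a b : (a < 25)%N -> (b < 25)%N -> ((addc a b < 25)%N /\ phi (addc a b) = phi a + phi b).
Proof.
move=> Ha Hb; move/allP: Hops => /(_ a (inr Ha)) /allP /(_ b (inr Hb)) /and4P [H1 _ /eqP H3 _] //.
Qed.
Lemma phiM a b : (a < 25)%N -> (b < 25)%N -> ((mulc a b < 25)%N /\ phi (mulc a b) = phi a * phi b).
Proof.
move=> Ha Hb; move/allP: Hops => /(_ a (inr Ha)) /allP /(_ b (inr Hb)) /and4P [_ H2 _ /eqP H4] //.
Qed.
Lemma phi_inj a b : (a < 25)%N -> (b < 25)%N -> phi a = phi b -> a = b.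
Proof.
move=> Ha Hb E; move/allP: Hinj => /(_ a (inr Ha)) /allP /(_ b (inr Hb)).
by rewrite E eqxx => /eqP.
Qed.
Lemma phi0 : phi 0 = 0. Proof. by case/and4P: Hcst => /eqP. Qed.
Lemma phi1 : phi oc = 1. Proof. by case/and4P: Hcst => _ /eqP. Qed.
Lemma oc_lt : (oc < 25)%N. Proof. by case/and4P: Hcst. Qed.
Lemma tc_lt : (tc < 25)%N. Proof. by case/and4P: Hcst. Qed.

Definition ctri := (nat * nat * nat)%type.
Definition phi3 (v : ctri) : tri R := (phi v.1.1, phi v.1.2, phi v.2).
Definition rng (v : ctri) := [&& (v.1.1 < 25)%N, (v.1.2 < 25)%N & (v.2 < 25)%N].
Definition dotc (v n : ctri) := addc (addc (mulc v.1.1 n.1.1) (mulc v.1.2 n.1.2)) (mulc v.2 n.2).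
Definition cntc (Vc : seq ctri) (n : ctri) := count (fun v => dotc v n == 0%N) Vc.

Lemma dotcE v n : rng v -> rng n -> dot (phi3 v) (phi3 n) = phi (dotc v n).
Proof.
case/and3P => H1 H2 H3 /and3P [K1 K2 K3].
case: (phiM H1 K1) => M1 E1; case: (phiM H2 K2) => M2 E2; case: (phiM H3 K3) => M3 E3.
case: (phiD M1 M2) => D1 F1; case: (phiD D1 M3) => D2 F2.
by rewrite /dotc F2 F1 E1 E2 E3.
Qed.

Lemma dotc_lt v n : rng v -> rng n -> (dotc v n < 25)%N.
Proof.
case/and3P => H1 H2 H3 /and3P [K1 K2 K3].
case: (phiM H1 K1) => M1 _; case: (phiM H2 K2) => M2 _; case: (phiM H3 K3) => M3 _.
case: (phiD M1 M2) => D1 _; by case: (phiD D1 M3).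
Qed.

Lemma cnt_le Vc n : all rng Vc -> rng n -> (cnt (map phi3 Vc) (phi3 n) <= cntc Vc n)%N.
Proof.
move=> Hr Hn; rewrite /cnt /cntc.
elim: Vc Hr => //= v s IH /andP [Hv Hs]; apply: leq_add; last exact: IH.
case: eqP => //= E; rewrite (dotcE Hv Hn) -phi0 in E.
by rewrite (phi_inj (dotc_lt Hv Hn) _ E).
Qed.

Definition lines_chkc (Vc : seq ctri) (N : nat) :=
  all (fun a => all (fun b =>
    if (cntc Vc (oc, a, b) <= N)%N then
      if mulc tc a == 0%N then
        if (cntc Vc (a, oc, b) <= N)%N then
          if mulc tc b == 0%N then (cntc Vc (a, b, oc) <= N)%N else true
        else false
      else true
    else false) cds) cds.

Lemma tmul0 a : (a < 25)%N -> phi tc * phi a = 0 -> mulc tc a = 0%N.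
Proof.
move=> Ha E; case: (phiM tc_lt Ha) => M1 E1.
by apply: phi_inj => //; rewrite E1 E phi0.
Qed.

Lemma lines_ok Vc N : all rng Vc -> lines_chkc Vc N ->
  forall n, ncond (phi tc) n -> (cnt (map phi3 Vc) n <= N)%N.
Proof.
move=> Hr /allP Hl [[x y] z].
case: (phi_surj x) => a Ha <-; case: (phi_surj y) => b Hb <-; case: (phi_surj z) => c Hc <-.
rewrite /ncond /= => Hn.
have R1 : rng (oc, b, c) by rewrite /rng /= oc_lt Hb Hc.
have R2 : rng (a, oc, c) by rewrite /rng /= oc_lt Ha Hc.
have R3 : rng (a, b, oc) by rewrite /rng /= oc_lt Ha Hb.
case: Hn => [E | [[E1 E] | [E1 [E2 E]]]].
- rewrite -phi1 in E; rewrite (phi_inj Ha oc_lt E).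
  apply: (leq_trans (cnt_le Hr R1)).
  move/allP: (Hl b (inr Hb)) => /(_ c (inr Hc)); by case: ifP.
- rewrite -phi1 in E; rewrite (phi_inj Hb oc_lt E).
  apply: (leq_trans (cnt_le Hr R2)).
  move/allP: (Hl a (inr Ha)) => /(_ c (inr Hc)).
  rewrite (tmul0 Ha E1) eqxx; case: ifP => // _; by case: ifP.
- rewrite -phi1 in E; rewrite (phi_inj Hc oc_lt E).
  apply: (leq_trans (cnt_le Hr R3)).
  move/allP: (Hl a (inr Ha)) => /(_ b (inr Hb)).
  rewrite (tmul0 Ha E1) (tmul0 Hb E2) eqxx; case: ifP => // _; case: ifP => // _; by case: ifP.
Qed.

Definition ptsc (v : ctri) := has (fun y => [|| mulc v.1.1 y == oc, mulc v.1.2 y == oc | mulc v.2 y == oc]) cds.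

Lemma pts_ok v : rng v -> ptsc v -> exists j y, coord (phi3 v) j * y = 1.
Proof.
case/and3P => H1 H2 H3 /hasP [y Hy /or3P [] /eqP E].
- exists i0, (phi y); case: (phiM H1 (_ : y < 25)%N) => [|_ <-]; [by rewrite mem_iota in Hy | by rewrite E phi1].
- exists i1, (phi y); case: (phiM H2 (_ : y < 25)%N) => [|_ <-]; [by rewrite mem_iota in Hy | by rewrite E phi1].
- exists i2, (phi y); case: (phiM H3 (_ : y < 25)%N) => [|_ <-]; [by rewrite mem_iota in Hy | by rewrite E phi1].
Qed.

Definition nrmc (v : ctri) :=
  [|| v.1.1 == oc, (mulc tc v.1.1 == 0%N) && (v.1.2 == oc)
    | [&& mulc tc v.1.1 == 0%N, mulc tc v.1.2 == 0%N & v.2 == oc]].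

Lemma tmulE a : (a < 25)%N -> mulc tc a = 0%N -> phi tc * phi a = 0.
Proof. by move=> Ha E; case: (phiM tc_lt Ha) => _ <-; rewrite E phi0. Qed.

Lemma nrm_ok v : rng v -> nrmc v -> nrm (phi tc) (phi3 v).
Proof.
case/and3P => H1 H2 H3; rewrite /nrmc /nrm /=.
case/or3P => [/eqP -> | /andP [/eqP E1 /eqP ->] | /and3P [/eqP E1 /eqP E2 /eqP ->]].
- by rewrite phi1 eqxx.
- by rewrite phi1 (tmulE H1 E1) !eqxx orbT.
- by rewrite phi1 (tmulE H1 E1) (tmulE H2 E2) !eqxx !orbT.
Qed.

Lemma uniq_ok Vc : all rng Vc -> uniq Vc -> uniq (map phi3 Vc).
Proof.
move=> /allP Hr Hu; rewrite map_inj_in_uniq // => [[[a b] c]] [[a' b'] c'] /Hr /and3P [/= H1 H2 H3] /Hr /and3P [/= K1 K2 K3].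
by case=> /(phi_inj H1 K1) -> /(phi_inj H2 K2) -> /(phi_inj H3 K3) ->.
Qed.

Definition els_c := map phi cds.
Lemma els_c_all x : x \in els_c.
Proof. by case: (phi_surj x) => a Ha <-; apply: map_f; apply: inr. Qed.

Lemma arc_codes Vc N k : local_chk els_c (phi tc) -> all rng Vc -> all ptsc Vc -> uniq Vc ->
  all nrmc Vc -> lines_chkc Vc N -> size Vc = k -> exists A, @proj_arc R A k N.
Proof.
move=> Hl Hr Hp Hu Hn Hli <-; rewrite -(size_map phi3).
apply: (arc_main els_c_all Hl).
- move=> v /mapP [w wV ->]; apply: pts_ok; [exact: (allP Hr) | exact: (allP Hp)].
- exact: uniq_ok.
- apply/allP => v /mapP [w wV ->]; apply: nrm_ok; [exact: (allP Hr) | exact: (allP Hn)].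
- exact: lines_ok.
Qed.
End Codes.

Definition rz425 : seq (nat * nat * nat) := [:: (0,0,1); (0,1,0); (0,1,5); (0,1,7); (0,1,9); (0,1,13); (0,1,14); (0,1,16); (0,1,18); (0,1,19); (0,1,21); (0,1,22); (0,1,23); (0,1,24); (0,5,1); (0,10,1); (0,15,1); (0,20,1); (1,0,1); (1,0,3); (1,0,7); (1,0,9); (1,0,11); (1,0,12); (1,0,17); (1,0,18); (1,0,19); (1,0,20); (1,0,21); (1,0,22); (1,0,23); (1,0,24); (1,1,0); (1,1,9); (1,1,12); (1,1,13); (1,1,14); (1,1,19); (1,1,20); (1,1,23); (1,1,24); (1,2,2); (1,2,4); (1,2,5); (1,2,7); (1,2,10); (1,2,11); (1,2,13); (1,2,15); (1,2,16); (1,2,17); (1,2,18); (1,2,21); (1,2,22); (1,2,24); (1,3,3); (1,3,4); (1,3,5); (1,3,6); (1,3,7); (1,3,8); (1,3,12); (1,3,14); (1,3,15); (1,3,16); (1,3,17); (1,3,18); (1,3,20); (1,3,24); (1,4,0); (1,4,4); (1,4,5); (1,4,6); (1,4,7); (1,4,8); (1,4,11); (1,4,12); (1,4,16); (1,4,17); (1,4,19); (1,4,21); (1,4,22); (1,4,24); (1,5,1); (1,5,2); (1,5,3); (1,5,4); (1,5,5); (1,5,6); (1,5,7); (1,5,12); (1,5,14); (1,5,16); (1,5,18); (1,5,22); (1,5,23); (1,5,24); (1,6,0); (1,6,1); (1,6,6); (1,6,9); (1,6,11); (1,6,13); (1,6,14); (1,6,16); (1,6,19); (1,6,20); (1,6,21);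 (1,6,22); (1,6,23); (1,6,24); (1,7,1); (1,7,2); (1,7,5); (1,7,6); (1,7,9); (1,7,10); (1,7,11); (1,7,12); (1,7,13); (1,7,14); (1,7,15); (1,7,17); (1,7,18); (1,7,22); (1,8,1); (1,8,3); (1,8,4); (1,8,5); (1,8,8); (1,8,9); (1,8,12); (1,8,15); (1,8,16); (1,8,17); (1,8,18); (1,8,19); (1,8,20); (1,8,22); (1,9,1); (1,9,2); (1,9,4); (1,9,5); (1,9,7); (1,9,9); (1,9,10); (1,9,11); (1,9,16); (1,9,17); (1,9,18); (1,9,21); (1,9,22); (1,9,24); (1,10,2); (1,10,3); (1,10,4); (1,10,6); (1,10,9); (1,10,11); (1,10,12); (1,10,15); (1,10,17); (1,10,18); (1,10,19); (1,10,21); (1,10,22); (1,10,23); (1,11,0); (1,11,7); (1,11,9); (1,11,13); (1,11,14); (1,11,19); (1,11,20); (1,11,23); (1,11,24); (1,12,1); (1,12,5); (1,12,7); (1,12,10); (1,12,12); (1,12,13); (1,12,15); (1,12,16); (1,12,17); (1,12,18); (1,12,19); (1,12,21); (1,12,22); (1,12,24); (1,13,1); (1,13,2); (1,13,3); (1,13,5); (1,13,8); (1,13,9); (1,13,11); (1,13,14); (1,13,15); (1,13,17); (1,13,18); (1,13,20); (1,13,22); (1,13,24); (1,14,1); (1,14,2); (1,14,3); (1,14,4); (1,14,6); (1,14,7); (1,14,9); (1,14,10); (1,14,12); (1,14,14); (1,14,15); (1,14,16); (1,14,17); (1,14,21); (1,15,0); (1,15,1); (1,15,2); (1,15,3); (1,15,7);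 (1,15,9); (1,15,11); (1,15,12); (1,15,14); (1,15,16); (1,15,17); (1,15,18); (1,15,23); (1,15,24); (1,16,0); (1,16,1); (1,16,6); (1,16,9); (1,16,11); (1,16,13); (1,16,14); (1,16,16); (1,16,17); (1,16,19); (1,16,20); (1,16,21); (1,16,23); (1,16,24); (1,17,2); (1,17,4); (1,17,5); (1,17,6); (1,17,7); (1,17,9); (1,17,10); (1,17,11); (1,17,12); (1,17,13); (1,17,15); (1,17,16); (1,17,17); (1,17,18); (1,18,2); (1,18,3); (1,18,4); (1,18,5); (1,18,7); (1,18,8); (1,18,11); (1,18,14); (1,18,15); (1,18,18); (1,18,19); (1,18,20); (1,18,21); (1,18,22); (1,19,1); (1,19,2); (1,19,6); (1,19,9); (1,19,11); (1,19,12); (1,19,13); (1,19,14); (1,19,15); (1,19,17); (1,19,19); (1,19,20); (1,19,21); (1,19,22); (1,20,2); (1,20,3); (1,20,4); (1,20,6); (1,20,7); (1,20,10); (1,20,14); (1,20,16); (1,20,17); (1,20,18); (1,20,19); (1,20,21); (1,20,22); (1,20,23); (1,21,0); (1,21,1); (1,21,2); (1,21,6); (1,21,9); (1,21,11); (1,21,13); (1,21,14); (1,21,16); (1,21,19); (1,21,20); (1,21,21); (1,21,23); (1,21,24); (1,22,1); (1,22,2); (1,22,5); (1,22,6); (1,22,7); (1,22,10); (1,22,12); (1,22,13); (1,22,14); (1,22,15); (1,22,18); (1,22,19); (1,22,21); (1,22,22); (1,23,2); (1,23,3); (1,23,5); (1,23,6); (1,23,7); (1,23,8); (1,23,9); (1,23,12);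 (1,23,15); (1,23,18); (1,23,19); (1,23,20); (1,23,21); (1,23,24); (1,24,0); (1,24,1); (1,24,2); (1,24,6); (1,24,7); (1,24,11); (1,24,12); (1,24,14); (1,24,16); (1,24,19); (1,24,20); (1,24,22); (1,24,23); (1,24,24); (5,0,1); (5,1,0); (5,1,1); (5,1,3); (5,1,4); (5,1,5); (5,1,7); (5,1,8); (5,1,9); (5,1,13); (5,1,14); (5,1,21); (5,1,22); (5,1,24); (5,5,1); (5,10,1); (5,15,1); (5,20,1); (10,1,0); (10,1,1); (10,1,3); (10,1,4); (10,1,5); (10,1,6); (10,1,7); (10,1,14); (10,1,18); (10,1,19); (10,1,22); (10,1,23); (10,1,24); (15,0,1); (15,1,0); (15,1,4); (15,1,5); (15,1,6); (15,1,7); (15,1,8); (15,1,9); (15,1,11); (15,1,13); (15,1,14); (15,1,18); (15,1,19); (15,1,22); (15,5,1); (15,10,1); (15,15,1); (15,20,1); (20,0,1); (20,1,0); (20,1,3); (20,1,4); (20,1,5); (20,1,7); (20,1,8); (20,1,9); (20,1,11); (20,1,16); (20,1,19); (20,1,22); (20,1,23); (20,1,24); (20,5,1); (20,10,1); (20,15,1); (20,20,1)]%N.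
Definition rz455 : seq (nat * nat * nat) := [:: (0,1,0); (0,1,1); (0,1,2); (0,1,5); (0,1,6); (0,1,7); (0,1,10); (0,1,11); (0,1,12); (0,1,15); (0,1,16); (0,1,17); (0,1,18); (0,1,19); (0,1,20); (0,1,21); (0,1,22); (0,1,23); (0,1,24); (1,0,1); (1,0,2); (1,0,5); (1,0,6); (1,0,7); (1,0,8); (1,0,9); (1,0,11); (1,0,13); (1,0,15); (1,0,16); (1,0,17); (1,0,18); (1,0,21); (1,0,22); (1,0,23); (1,1,0); (1,1,1); (1,1,2); (1,1,4); (1,1,6); (1,1,7); (1,1,8); (1,1,9); (1,1,12); (1,1,14); (1,1,15); (1,1,19); (1,1,20); (1,1,21); (1,1,22); (1,1,24); (1,2,0); (1,2,3); (1,2,4); (1,2,5); (1,2,9); (1,2,10); (1,2,13); (1,2,14); (1,2,15); (1,2,17); (1,2,18); (1,2,19); (1,2,20); (1,2,21); (1,2,22); (1,2,23); (1,3,0); (1,3,1); (1,3,3); (1,3,4); (1,3,5); (1,3,6); (1,3,7); (1,3,9); (1,3,10); (1,3,12); (1,3,13); (1,3,14); (1,3,18); (1,3,20); (1,3,22); (1,3,23); (1,4,0); (1,4,3); (1,4,9); (1,4,12); (1,4,13); (1,4,14); (1,4,15); (1,4,17); (1,4,18); (1,4,19); (1,4,24); (1,5,2); (1,5,3); (1,5,5); (1,5,7); (1,5,12); (1,5,13); (1,5,14); (1,5,17); (1,5,18); (1,5,20); (1,5,23); (1,6,0); (1,6,1); (1,6,2); (1,6,3); (1,6,5); (1,6,6);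 (1,6,7); (1,6,12); (1,6,20); (1,6,21); (1,6,22); (1,7,0); (1,7,1); (1,7,3); (1,7,4); (1,7,5); (1,7,8); (1,7,9); (1,7,10); (1,7,12); (1,7,13); (1,7,15); (1,7,17); (1,7,19); (1,7,20); (1,7,23); (1,7,24); (1,8,1); (1,8,2); (1,8,3); (1,8,4); (1,8,5); (1,8,8); (1,8,10); (1,8,12); (1,8,15); (1,8,17); (1,8,18); (1,8,19); (1,8,20); (1,8,21); (1,8,23); (1,8,24); (1,9,1); (1,9,2); (1,9,4); (1,9,6); (1,9,7); (1,9,8); (1,9,10); (1,9,11); (1,9,14); (1,9,16); (1,9,18); (1,9,19); (1,9,20); (1,9,21); (1,9,23); (1,9,24); (1,10,1); (1,10,2); (1,10,3); (1,10,6); (1,10,8); (1,10,10); (1,10,11); (1,10,12); (1,10,16); (1,10,17); (1,10,18); (1,10,19); (1,10,20); (1,10,21); (1,10,22); (1,10,23); (1,11,0); (1,11,1); (1,11,2); (1,11,4); (1,11,5); (1,11,6); (1,11,7); (1,11,9); (1,11,10); (1,11,12); (1,11,14); (1,11,19); (1,11,21); (1,11,22); (1,11,23); (1,11,24); (1,12,0); (1,12,5); (1,12,6); (1,12,7); (1,12,8); (1,12,9); (1,12,10); (1,12,12); (1,12,13); (1,12,14); (1,12,15); (1,12,18); (1,12,19); (1,12,20); (1,12,23); (1,12,24); (1,13,0); (1,13,3); (1,13,5); (1,13,7); (1,13,8); (1,13,9); (1,13,13); (1,13,14); (1,13,15); (1,13,16); (1,13,17); (1,13,19); (1,13,20); (1,13,21);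 (1,13,22); (1,13,23); (1,14,1); (1,14,3); (1,14,4); (1,14,5); (1,14,6); (1,14,9); (1,14,11); (1,14,13); (1,14,15); (1,14,16); (1,14,17); (1,14,19); (1,14,21); (1,14,22); (1,14,23); (1,14,24); (1,15,0); (1,15,1); (1,15,2); (1,15,3); (1,15,6); (1,15,7); (1,15,8); (1,15,10); (1,15,11); (1,15,12); (1,15,13); (1,15,16); (1,15,21); (1,15,22); (1,15,23); (1,15,24); (1,16,1); (1,16,2); (1,16,4); (1,16,5); (1,16,6); (1,16,7); (1,16,9); (1,16,10); (1,16,12); (1,16,14); (1,16,15); (1,16,18); (1,16,19); (1,16,21); (1,16,22); (1,16,24); (1,17,2); (1,17,3); (1,17,4); (1,17,7); (1,17,8); (1,17,9); (1,17,11); (1,17,14); (1,17,18); (1,17,23); (1,17,24); (1,18,0); (1,18,2); (1,18,3); (1,18,4); (1,18,5); (1,18,8); (1,18,9); (1,18,10); (1,18,11); (1,18,12); (1,18,13); (1,18,15); (1,18,16); (1,18,18); (1,18,22); (1,18,24); (1,19,0); (1,19,1); (1,19,3); (1,19,4); (1,19,6); (1,19,7); (1,19,8); (1,19,9); (1,19,10); (1,19,11); (1,19,12); (1,19,14); (1,19,16); (1,19,18); (1,19,21); (1,19,24); (1,20,0); (1,20,1); (1,20,3); (1,20,4); (1,20,6); (1,20,7); (1,20,8); (1,20,11); (1,20,12); (1,20,13); (1,20,15); (1,20,16); (1,20,17); (1,20,18); (1,20,21); (1,20,22); (1,21,1); (1,21,2); (1,21,4); (1,21,6); (1,21,7); (1,21,9);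 (1,21,10); (1,21,12); (1,21,13); (1,21,14); (1,21,15); (1,21,19); (1,21,20); (1,21,21); (1,21,22); (1,21,24); (1,22,0); (1,22,2); (1,22,3); (1,22,4); (1,22,5); (1,22,8); (1,22,10); (1,22,13); (1,22,14); (1,22,15); (1,22,16); (1,22,18); (1,22,19); (1,22,20); (1,22,22); (1,22,24); (1,23,0); (1,23,2); (1,23,6); (1,23,7); (1,23,8); (1,23,10); (1,23,11); (1,23,13); (1,23,14); (1,23,15); (1,23,17); (1,23,18); (1,23,19); (1,23,20); (1,23,23); (1,23,24); (1,24,1); (1,24,2); (1,24,4); (1,24,5); (1,24,6); (1,24,8); (1,24,9); (1,24,11); (1,24,13); (1,24,14); (1,24,16); (1,24,19); (1,24,20); (1,24,21); (1,24,22); (1,24,23); (5,0,1); (5,1,0); (5,1,2); (5,1,5); (5,1,7); (5,1,10); (5,1,12); (5,1,14); (5,1,15); (5,1,17); (5,1,18); (5,1,19); (5,1,20); (5,1,22); (5,1,23); (5,5,1); (5,10,1); (5,15,1); (5,20,1); (10,1,0); (10,1,1); (10,1,2); (10,1,5); (10,1,6); (10,1,7); (10,1,9); (10,1,10); (10,1,11); (10,1,12); (10,1,14); (10,1,15); (10,1,16); (10,1,17); (10,1,18); (10,1,20); (10,1,21); (10,1,22); (10,1,23); (15,0,1); (15,1,4); (15,1,9); (15,1,18); (15,1,23); (15,5,1); (15,10,1); (15,15,1); (15,20,1); (20,0,1); (20,1,4); (20,1,18); (20,1,23); (20,1,24); (20,5,1); (20,10,1); (20,15,1); (20,20,1)]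%N.
Definition rs425 : seq (nat * nat * nat) := [:: (0,0,5); (0,1,5); (0,2,5); (0,4,5); (0,5,1); (0,5,2); (0,5,3); (0,5,4); (0,5,5); (0,5,8); (0,5,11); (0,5,13); (0,5,16); (0,5,18); (0,5,19); (0,5,20); (0,5,23); (0,5,24); (1,0,5); (1,2,5); (1,3,5); (1,4,5); (1,5,1); (1,5,2); (1,5,3); (1,5,4); (1,5,5); (1,5,8); (1,5,10); (1,5,12); (1,5,16); (1,5,17); (1,5,19); (1,5,22); (1,5,23); (1,5,24); (2,0,5); (2,1,5); (2,2,5); (2,3,5); (2,5,1); (2,5,2); (2,5,3); (2,5,4); (2,5,5); (2,5,8); (2,5,11); (2,5,14); (2,5,15); (2,5,17); (2,5,19); (2,5,21); (2,5,22); (2,5,23); (3,0,5); (3,1,5); (3,3,5); (3,4,5); (3,5,1); (3,5,2); (3,5,3); (3,5,4); (3,5,5); (3,5,8); (3,5,10); (3,5,13); (3,5,15); (3,5,17); (3,5,18); (3,5,20); (3,5,21); (3,5,22); (4,1,5); (4,2,5); (4,3,5); (4,4,5); (4,5,1); (4,5,2); (4,5,3); (4,5,4); (4,5,5); (4,5,8); (4,5,12); (4,5,14); (4,5,15); (4,5,16); (4,5,18); (4,5,20); (4,5,21); (4,5,24); (5,0,2); (5,0,4); (5,0,5); (5,0,6); (5,0,7); (5,0,8); (5,0,10); (5,0,11); (5,0,12); (5,0,13); (5,0,15); (5,0,16); (5,0,18); (5,0,19); (5,1,0); (5,1,2); (5,1,6); (5,1,7); (5,1,8); (5,1,9); (5,1,10);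 (5,1,11); (5,1,13); (5,1,14); (5,1,15); (5,1,16); (5,1,18); (5,1,19); (5,2,0); (5,2,3); (5,2,5); (5,2,7); (5,2,8); (5,2,9); (5,2,11); (5,2,12); (5,2,13); (5,2,14); (5,2,15); (5,2,16); (5,2,18); (5,2,19); (5,3,1); (5,3,3); (5,3,5); (5,3,6); (5,3,8); (5,3,9); (5,3,10); (5,3,11); (5,3,12); (5,3,14); (5,3,15); (5,3,16); (5,3,18); (5,3,19); (5,4,1); (5,4,4); (5,4,5); (5,4,6); (5,4,7); (5,4,9); (5,4,10); (5,4,12); (5,4,13); (5,4,14); (5,4,15); (5,4,16); (5,4,18); (5,4,19); (5,5,0); (5,5,1); (5,5,3); (5,5,6); (5,5,10); (5,5,12); (5,5,13); (5,5,14); (5,5,17); (5,5,18); (5,5,20); (5,5,22); (5,5,23); (5,5,24); (5,6,1); (5,6,2); (5,6,4); (5,6,7); (5,6,10); (5,6,11); (5,6,12); (5,6,13); (5,6,16); (5,6,17); (5,6,20); (5,6,21); (5,6,22); (5,6,24); (5,7,0); (5,7,2); (5,7,3); (5,7,8); (5,7,10); (5,7,11); (5,7,13); (5,7,14); (5,7,15); (5,7,16); (5,7,21); (5,7,22); (5,7,23); (5,7,24); (5,8,1); (5,8,3); (5,8,4); (5,8,9); (5,8,11); (5,8,12); (5,8,13); (5,8,14); (5,8,15); (5,8,19); (5,8,20); (5,8,21); (5,8,23); (5,8,24); (5,9,0); (5,9,2); (5,9,4); (5,9,5); (5,9,10); (5,9,11); (5,9,12); (5,9,14); (5,9,18); (5,9,19);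 (5,9,20); (5,9,21); (5,9,22); (5,9,23); (5,10,0); (5,10,1); (5,10,3); (5,10,4); (5,10,5); (5,10,9); (5,10,12); (5,10,13); (5,10,17); (5,10,18); (5,10,20); (5,10,21); (5,10,22); (5,10,23); (5,11,0); (5,11,1); (5,11,2); (5,11,3); (5,11,5); (5,11,6); (5,11,13); (5,11,14); (5,11,15); (5,11,19); (5,11,20); (5,11,22); (5,11,23); (5,11,24); (5,12,0); (5,12,2); (5,12,3); (5,12,4); (5,12,6); (5,12,7); (5,12,10); (5,12,14); (5,12,16); (5,12,17); (5,12,20); (5,12,21); (5,12,22); (5,12,24); (5,13,0); (5,13,1); (5,13,2); (5,13,4); (5,13,7); (5,13,8); (5,13,10); (5,13,11); (5,13,18); (5,13,19); (5,13,21); (5,13,22); (5,13,23); (5,13,24); (5,14,1); (5,14,2); (5,14,3); (5,14,4); (5,14,8); (5,14,9); (5,14,11); (5,14,12); (5,14,15); (5,14,16); (5,14,20); (5,14,21); (5,14,23); (5,14,24); (5,15,1); (5,15,4); (5,15,5); (5,15,7); (5,15,11); (5,15,13); (5,15,15); (5,15,19); (5,16,1); (5,16,3); (5,16,6); (5,16,9); (5,16,12); (5,16,14); (5,16,15); (5,16,16); (5,16,20); (5,16,21); (5,16,22); (5,16,23); (5,16,24); (5,17,0); (5,17,3); (5,17,5); (5,17,8); (5,17,10); (5,17,13); (5,17,16); (5,17,17); (5,17,20); (5,17,21); (5,17,22); (5,17,23); (5,17,24); (5,18,0); (5,18,2); (5,18,7); (5,18,9); (5,18,11); (5,18,14); (5,18,17);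 (5,18,18); (5,18,20); (5,18,21); (5,18,22); (5,18,23); (5,18,24); (5,19,2); (5,19,4); (5,19,6); (5,19,8); (5,19,10); (5,19,12); (5,19,18); (5,19,19); (5,20,0); (5,20,1); (5,20,6); (5,20,7); (5,20,8); (5,20,9); (5,20,11); (5,20,13); (5,20,15); (5,20,18); (5,20,19); (5,20,20); (5,20,21); (5,20,24); (5,21,0); (5,21,4); (5,21,5); (5,21,6); (5,21,7); (5,21,8); (5,21,10); (5,21,13); (5,21,15); (5,21,16); (5,21,19); (5,21,20); (5,21,21); (5,21,22); (5,22,3); (5,22,4); (5,22,5); (5,22,6); (5,22,7); (5,22,9); (5,22,10); (5,22,12); (5,22,15); (5,22,16); (5,22,17); (5,22,21); (5,22,22); (5,22,23); (5,23,2); (5,23,3); (5,23,5); (5,23,6); (5,23,8); (5,23,9); (5,23,12); (5,23,14); (5,23,16); (5,23,17); (5,23,18); (5,23,22); (5,23,23); (5,23,24); (5,24,1); (5,24,2); (5,24,5); (5,24,7); (5,24,8); (5,24,9); (5,24,11); (5,24,14); (5,24,17); (5,24,18); (5,24,19); (5,24,20); (5,24,23); (5,24,24)]%N.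
Definition rs455 : seq (nat * nat * nat) := [:: (0,1,5); (0,2,5); (0,4,5); (0,5,0); (0,5,1); (0,5,2); (0,5,5); (0,5,7); (0,5,8); (0,5,15); (0,5,18); (0,5,21); (0,5,22); (0,5,23); (1,0,5); (1,1,5); (1,3,5); (1,5,0); (1,5,3); (1,5,4); (1,5,5); (1,5,7); (1,5,8); (1,5,10); (1,5,11); (1,5,12); (1,5,13); (1,5,14); (1,5,16); (1,5,18); (1,5,21); (1,5,22); (1,5,23); (2,0,5); (2,2,5); (2,4,5); (2,5,1); (2,5,2); (2,5,3); (2,5,5); (2,5,7); (2,5,8); (2,5,10); (2,5,11); (2,5,12); (2,5,13); (2,5,14); (2,5,16); (2,5,19); (2,5,21); (2,5,22); (2,5,23); (3,1,5); (3,3,5); (3,4,5); (3,5,0); (3,5,1); (3,5,4); (3,5,5); (3,5,7); (3,5,8); (3,5,10); (3,5,11); (3,5,12); (3,5,13); (3,5,14); (3,5,17); (3,5,19); (3,5,21); (3,5,22); (3,5,23); (4,0,5); (4,2,5); (4,3,5); (4,5,2); (4,5,3); (4,5,4); (4,5,5); (4,5,7); (4,5,8); (4,5,10); (4,5,11); (4,5,12); (4,5,13); (4,5,14); (4,5,15); (4,5,17); (4,5,21); (4,5,22); (4,5,23); (5,0,0); (5,0,3); (5,0,4); (5,0,5); (5,0,6); (5,0,7); (5,0,9); (5,0,10); (5,0,11); (5,0,12); (5,0,13); (5,0,17); (5,0,20); (5,0,21); (5,0,23); (5,0,24); (5,1,2); (5,1,3); (5,1,4); (5,1,5); (5,1,6);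 (5,1,8); (5,1,9); (5,1,11); (5,1,12); (5,1,13); (5,1,14); (5,1,15); (5,1,21); (5,1,22); (5,1,23); (5,1,24); (5,2,1); (5,2,2); (5,2,3); (5,2,5); (5,2,7); (5,2,8); (5,2,9); (5,2,10); (5,2,12); (5,2,13); (5,2,14); (5,2,18); (5,2,20); (5,2,21); (5,2,22); (5,2,24); (5,3,0); (5,3,1); (5,3,2); (5,3,6); (5,3,7); (5,3,8); (5,3,9); (5,3,10); (5,3,11); (5,3,13); (5,3,14); (5,3,16); (5,3,20); (5,3,22); (5,3,23); (5,3,24); (5,4,0); (5,4,1); (5,4,4); (5,4,5); (5,4,6); (5,4,7); (5,4,8); (5,4,10); (5,4,11); (5,4,12); (5,4,14); (5,4,19); (5,4,20); (5,4,21); (5,4,22); (5,4,23); (5,5,1); (5,5,2); (5,5,3); (5,5,4); (5,5,6); (5,5,9); (5,5,10); (5,5,11); (5,5,12); (5,5,13); (5,5,16); (5,5,18); (5,5,19); (5,5,22); (5,5,23); (5,5,24); (5,6,0); (5,6,1); (5,6,2); (5,6,4); (5,6,7); (5,6,9); (5,6,11); (5,6,12); (5,6,13); (5,6,14); (5,6,16); (5,6,18); (5,6,19); (5,6,21); (5,6,22); (5,6,23); (5,7,0); (5,7,2); (5,7,3); (5,7,4); (5,7,5); (5,7,7); (5,7,10); (5,7,12); (5,7,13); (5,7,14); (5,7,16); (5,7,18); (5,7,19); (5,7,20); (5,7,21); (5,7,22); (5,8,0); (5,8,1); (5,8,2); (5,8,3); (5,8,5); (5,8,8); (5,8,10); (5,8,11);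 (5,8,13); (5,8,14); (5,8,16); (5,8,18); (5,8,19); (5,8,20); (5,8,21); (5,8,24); (5,9,0); (5,9,1); (5,9,3); (5,9,4); (5,9,6); (5,9,8); (5,9,10); (5,9,11); (5,9,12); (5,9,14); (5,9,16); (5,9,18); (5,9,19); (5,9,20); (5,9,23); (5,9,24); (5,10,6); (5,10,7); (5,10,8); (5,10,9); (5,10,10); (5,10,13); (5,10,14); (5,10,16); (5,10,17); (5,10,23); (5,10,24); (5,11,0); (5,11,1); (5,11,2); (5,11,3); (5,11,4); (5,11,5); (5,11,6); (5,11,8); (5,11,9); (5,11,10); (5,11,11); (5,11,14); (5,11,16); (5,11,17); (5,11,21); (5,11,22); (5,12,0); (5,12,1); (5,12,2); (5,12,3); (5,12,4); (5,12,5); (5,12,6); (5,12,7); (5,12,8); (5,12,10); (5,12,11); (5,12,12); (5,12,16); (5,12,17); (5,12,20); (5,12,24); (5,13,0); (5,13,1); (5,13,2); (5,13,3); (5,13,4); (5,13,5); (5,13,7); (5,13,8); (5,13,9); (5,13,11); (5,13,12); (5,13,13); (5,13,16); (5,13,17); (5,13,22); (5,13,23); (5,14,0); (5,14,1); (5,14,2); (5,14,3); (5,14,4); (5,14,5); (5,14,6); (5,14,7); (5,14,9); (5,14,12); (5,14,13); (5,14,14); (5,14,16); (5,14,17); (5,14,20); (5,14,21); (5,15,0); (5,15,1); (5,15,3); (5,15,4); (5,15,6); (5,15,7); (5,15,8); (5,15,9); (5,15,10); (5,15,13); (5,15,17); (5,15,19); (5,15,20); (5,15,21); (5,15,22); (5,15,23);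 (5,16,0); (5,16,2); (5,16,3); (5,16,4); (5,16,5); (5,16,7); (5,16,8); (5,16,9); (5,16,11); (5,16,13); (5,16,17); (5,16,19); (5,16,20); (5,16,21); (5,16,22); (5,16,23); (5,17,1); (5,17,2); (5,17,3); (5,17,4); (5,17,5); (5,17,6); (5,17,8); (5,17,9); (5,17,11); (5,17,14); (5,17,17); (5,17,19); (5,17,20); (5,17,21); (5,17,22); (5,17,23); (5,18,0); (5,18,1); (5,18,2); (5,18,3); (5,18,5); (5,18,6); (5,18,7); (5,18,9); (5,18,12); (5,18,14); (5,18,17); (5,18,19); (5,18,20); (5,18,21); (5,18,22); (5,18,23); (5,19,0); (5,19,1); (5,19,2); (5,19,4); (5,19,5); (5,19,6); (5,19,7); (5,19,8); (5,19,10); (5,19,12); (5,19,17); (5,19,19); (5,19,20); (5,19,21); (5,19,22); (5,19,23); (5,20,0); (5,20,1); (5,20,2); (5,20,3); (5,20,4); (5,20,5); (5,20,9); (5,20,15); (5,20,16); (5,20,17); (5,20,18); (5,20,19); (5,20,20); (5,20,21); (5,20,22); (5,20,23); (5,20,24); (5,21,8); (5,21,9); (5,21,10); (5,21,11); (5,21,12); (5,21,13); (5,21,14); (5,22,7); (5,22,8); (5,22,10); (5,22,11); (5,22,12); (5,22,13); (5,22,14); (5,22,15); (5,22,16); (5,22,17); (5,22,18); (5,22,19); (5,22,20); (5,22,21); (5,22,22); (5,22,23); (5,22,24); (5,23,6); (5,23,7); (5,24,5); (5,24,6); (5,24,10); (5,24,11); (5,24,12); (5,24,13); (5,24,14)]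%N.
Definition addTZ : seq (seq nat) := [:: [:: 0; 1; 2; 3; 4; 5; 6; 7; 8; 9; 10; 11; 12; 13; 14; 15; 16; 17; 18; 19; 20; 21; 22; 23; 24]; [:: 1; 2; 3; 4; 5; 6; 7; 8; 9; 10; 11; 12; 13; 14; 15; 16; 17; 18; 19; 20; 21; 22; 23; 24; 0]; [:: 2; 3; 4; 5; 6; 7; 8; 9; 10; 11; 12; 13; 14; 15; 16; 17; 18; 19; 20; 21; 22; 23; 24; 0; 1]; [:: 3; 4; 5; 6; 7; 8; 9; 10; 11; 12; 13; 14; 15; 16; 17; 18; 19; 20; 21; 22; 23; 24; 0; 1; 2]; [:: 4; 5; 6; 7; 8; 9; 10; 11; 12; 13; 14; 15; 16; 17; 18; 19; 20; 21; 22; 23; 24; 0; 1; 2; 3]; [:: 5; 6; 7; 8; 9; 10; 11; 12; 13; 14; 15; 16; 17; 18; 19; 20; 21; 22; 23; 24; 0; 1; 2; 3; 4]; [:: 6; 7; 8; 9; 10; 11; 12; 13; 14; 15; 16; 17; 18; 19; 20; 21; 22; 23; 24; 0; 1; 2; 3; 4; 5]; [:: 7; 8; 9; 10; 11; 12; 13; 14; 15; 16; 17; 18; 19; 20; 21; 22; 23; 24; 0; 1; 2; 3; 4; 5; 6]; [:: 8; 9; 10; 11; 12; 13; 14; 15; 16; 17; 18; 19; 20; 21; 22; 23; 24; 0; 1; 2; 3; 4; 5; 6; 7]; [:: 9; 10; 11; 12; 13; 14; 15; 16; 17; 18; 19; 20; 21; 22; 23; 24; 0; 1; 2; 3; 4;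 5; 6; 7; 8]; [:: 10; 11; 12; 13; 14; 15; 16; 17; 18; 19; 20; 21; 22; 23; 24; 0; 1; 2; 3; 4; 5; 6; 7; 8; 9]; [:: 11; 12; 13; 14; 15; 16; 17; 18; 19; 20; 21; 22; 23; 24; 0; 1; 2; 3; 4; 5; 6; 7; 8; 9; 10]; [:: 12; 13; 14; 15; 16; 17; 18; 19; 20; 21; 22; 23; 24; 0; 1; 2; 3; 4; 5; 6; 7; 8; 9; 10; 11]; [:: 13; 14; 15; 16; 17; 18; 19; 20; 21; 22; 23; 24; 0; 1; 2; 3; 4; 5; 6; 7; 8; 9; 10; 11; 12]; [:: 14; 15; 16; 17; 18; 19; 20; 21; 22; 23; 24; 0; 1; 2; 3; 4; 5; 6; 7; 8; 9; 10; 11; 12; 13]; [:: 15; 16; 17; 18; 19; 20; 21; 22; 23; 24; 0; 1; 2; 3; 4; 5; 6; 7; 8; 9; 10; 11; 12; 13; 14]; [:: 16; 17; 18; 19; 20; 21; 22; 23; 24; 0; 1; 2; 3; 4; 5; 6; 7; 8; 9; 10; 11; 12; 13; 14; 15]; [:: 17; 18; 19; 20; 21; 22; 23; 24; 0; 1; 2; 3; 4; 5; 6; 7; 8; 9; 10; 11; 12; 13; 14; 15; 16]; [:: 18; 19; 20; 21; 22; 23; 24; 0; 1; 2; 3; 4; 5; 6; 7; 8; 9; 10; 11; 12; 13; 14; 15; 16; 17]; [:: 19; 20; 21; 22; 23; 24; 0; 1; 2; 3; 4; 5; 6; 7; 8; 9; 10; 11; 12; 13; 14; 15; 16; 17; 18];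 [:: 20; 21; 22; 23; 24; 0; 1; 2; 3; 4; 5; 6; 7; 8; 9; 10; 11; 12; 13; 14; 15; 16; 17; 18; 19]; [:: 21; 22; 23; 24; 0; 1; 2; 3; 4; 5; 6; 7; 8; 9; 10; 11; 12; 13; 14; 15; 16; 17; 18; 19; 20]; [:: 22; 23; 24; 0; 1; 2; 3; 4; 5; 6; 7; 8; 9; 10; 11; 12; 13; 14; 15; 16; 17; 18; 19; 20; 21]; [:: 23; 24; 0; 1; 2; 3; 4; 5; 6; 7; 8; 9; 10; 11; 12; 13; 14; 15; 16; 17; 18; 19; 20; 21; 22]; [:: 24; 0; 1; 2; 3; 4; 5; 6; 7; 8; 9; 10; 11; 12; 13; 14; 15; 16; 17; 18; 19; 20; 21; 22; 23]]%N.
Definition mulTZ : seq (seq nat) := [:: [:: 0; 0; 0; 0; 0; 0; 0; 0; 0; 0; 0; 0; 0; 0; 0; 0; 0; 0; 0; 0; 0; 0; 0; 0; 0]; [:: 0; 1; 2; 3; 4; 5; 6; 7; 8; 9; 10; 11; 12; 13; 14; 15; 16; 17; 18; 19; 20; 21; 22; 23; 24]; [:: 0; 2; 4; 6; 8; 10; 12; 14; 16; 18; 20; 22; 24; 1; 3; 5; 7; 9; 11; 13; 15; 17; 19; 21; 23]; [:: 0; 3; 6; 9; 12; 15; 18; 21; 24; 2; 5; 8; 11; 14; 17; 20; 23; 1; 4; 7; 10; 13; 16; 19; 22]; [:: 0; 4; 8; 12; 16; 20; 24; 3; 7; 11; 15; 19; 23; 2; 6; 10; 14; 18; 22; 1;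 5; 9; 13; 17; 21]; [:: 0; 5; 10; 15; 20; 0; 5; 10; 15; 20; 0; 5; 10; 15; 20; 0; 5; 10; 15; 20; 0; 5; 10; 15; 20]; [:: 0; 6; 12; 18; 24; 5; 11; 17; 23; 4; 10; 16; 22; 3; 9; 15; 21; 2; 8; 14; 20; 1; 7; 13; 19]; [:: 0; 7; 14; 21; 3; 10; 17; 24; 6; 13; 20; 2; 9; 16; 23; 5; 12; 19; 1; 8; 15; 22; 4; 11; 18]; [:: 0; 8; 16; 24; 7; 15; 23; 6; 14; 22; 5; 13; 21; 4; 12; 20; 3; 11; 19; 2; 10; 18; 1; 9; 17]; [:: 0; 9; 18; 2; 11; 20; 4; 13; 22; 6; 15; 24; 8; 17; 1; 10; 19; 3; 12; 21; 5; 14; 23; 7; 16]; [:: 0; 10; 20; 5; 15; 0; 10; 20; 5; 15; 0; 10; 20; 5; 15; 0; 10; 20; 5; 15; 0; 10; 20; 5; 15]; [:: 0; 11; 22; 8; 19; 5; 16; 2; 13; 24; 10; 21; 7; 18; 4; 15; 1; 12; 23; 9; 20; 6; 17; 3; 14]; [:: 0; 12; 24; 11; 23; 10; 22; 9; 21; 8; 20; 7; 19; 6; 18; 5; 17; 4; 16; 3; 15; 2; 14; 1; 13]; [:: 0; 13; 1; 14; 2; 15; 3; 16; 4; 17; 5; 18; 6; 19; 7; 20; 8; 21; 9; 22; 10; 23; 11; 24; 12]; [:: 0; 14; 3; 17; 6; 20; 9; 23; 12; 1; 15; 4; 18; 7; 21; 10; 24; 13; 2; 16; 5; 19; 8; 22;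 11]; [:: 0; 15; 5; 20; 10; 0; 15; 5; 20; 10; 0; 15; 5; 20; 10; 0; 15; 5; 20; 10; 0; 15; 5; 20; 10]; [:: 0; 16; 7; 23; 14; 5; 21; 12; 3; 19; 10; 1; 17; 8; 24; 15; 6; 22; 13; 4; 20; 11; 2; 18; 9]; [:: 0; 17; 9; 1; 18; 10; 2; 19; 11; 3; 20; 12; 4; 21; 13; 5; 22; 14; 6; 23; 15; 7; 24; 16; 8]; [:: 0; 18; 11; 4; 22; 15; 8; 1; 19; 12; 5; 23; 16; 9; 2; 20; 13; 6; 24; 17; 10; 3; 21; 14; 7]; [:: 0; 19; 13; 7; 1; 20; 14; 8; 2; 21; 15; 9; 3; 22; 16; 10; 4; 23; 17; 11; 5; 24; 18; 12; 6]; [:: 0; 20; 15; 10; 5; 0; 20; 15; 10; 5; 0; 20; 15; 10; 5; 0; 20; 15; 10; 5; 0; 20; 15; 10; 5]; [:: 0; 21; 17; 13; 9; 5; 1; 22; 18; 14; 10; 6; 2; 23; 19; 15; 11; 7; 3; 24; 20; 16; 12; 8; 4]; [:: 0; 22; 19; 16; 13; 10; 7; 4; 1; 23; 20; 17; 14; 11; 8; 5; 2; 24; 21; 18; 15; 12; 9; 6; 3]; [:: 0; 23; 21; 19; 17; 15; 13; 11; 9; 7; 5; 3; 1; 24; 22; 20; 18; 16; 14; 12; 10; 8; 6; 4; 2]; [:: 0; 24; 23; 22; 21; 20; 19; 18; 17; 16; 15; 14; 13; 12; 11; 10; 9; 8; 7; 6; 5; 4; 3; 2; 1]]%N.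
Definition addTS : seq (seq nat) := [:: [:: 0; 1; 2; 3; 4; 5; 6; 7; 8; 9; 10; 11; 12; 13; 14; 15; 16; 17; 18; 19; 20; 21; 22; 23; 24]; [:: 1; 2; 3; 4; 0; 6; 7; 8; 9; 5; 11; 12; 13; 14; 10; 16; 17; 18; 19; 15; 21; 22; 23; 24; 20]; [:: 2; 3; 4; 0; 1; 7; 8; 9; 5; 6; 12; 13; 14; 10; 11; 17; 18; 19; 15; 16; 22; 23; 24; 20; 21]; [:: 3; 4; 0; 1; 2; 8; 9; 5; 6; 7; 13; 14; 10; 11; 12; 18; 19; 15; 16; 17; 23; 24; 20; 21; 22]; [:: 4; 0; 1; 2; 3; 9; 5; 6; 7; 8; 14; 10; 11; 12; 13; 19; 15; 16; 17; 18; 24; 20; 21; 22; 23]; [:: 5; 6; 7; 8; 9; 10; 11; 12; 13; 14; 15; 16; 17; 18; 19; 20; 21; 22; 23; 24; 0; 1; 2; 3; 4]; [:: 6; 7; 8; 9; 5; 11; 12; 13; 14; 10; 16; 17; 18; 19; 15; 21; 22; 23; 24; 20; 1; 2; 3; 4; 0]; [:: 7; 8; 9; 5; 6; 12; 13; 14; 10; 11; 17; 18; 19; 15; 16; 22; 23; 24; 20; 21; 2; 3; 4; 0; 1]; [:: 8; 9; 5; 6; 7; 13; 14; 10; 11; 12; 18; 19; 15; 16; 17; 23; 24; 20; 21; 22; 3; 4; 0; 1; 2]; [:: 9; 5; 6; 7; 8; 14; 10; 11; 12; 13; 19; 15; 16; 17; 18; 24; 20; 21; 22; 23; 4; 0;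 1; 2; 3]; [:: 10; 11; 12; 13; 14; 15; 16; 17; 18; 19; 20; 21; 22; 23; 24; 0; 1; 2; 3; 4; 5; 6; 7; 8; 9]; [:: 11; 12; 13; 14; 10; 16; 17; 18; 19; 15; 21; 22; 23; 24; 20; 1; 2; 3; 4; 0; 6; 7; 8; 9; 5]; [:: 12; 13; 14; 10; 11; 17; 18; 19; 15; 16; 22; 23; 24; 20; 21; 2; 3; 4; 0; 1; 7; 8; 9; 5; 6]; [:: 13; 14; 10; 11; 12; 18; 19; 15; 16; 17; 23; 24; 20; 21; 22; 3; 4; 0; 1; 2; 8; 9; 5; 6; 7]; [:: 14; 10; 11; 12; 13; 19; 15; 16; 17; 18; 24; 20; 21; 22; 23; 4; 0; 1; 2; 3; 9; 5; 6; 7; 8]; [:: 15; 16; 17; 18; 19; 20; 21; 22; 23; 24; 0; 1; 2; 3; 4; 5; 6; 7; 8; 9; 10; 11; 12; 13; 14]; [:: 16; 17; 18; 19; 15; 21; 22; 23; 24; 20; 1; 2; 3; 4; 0; 6; 7; 8; 9; 5; 11; 12; 13; 14; 10]; [:: 17; 18; 19; 15; 16; 22; 23; 24; 20; 21; 2; 3; 4; 0; 1; 7; 8; 9; 5; 6; 12; 13; 14; 10; 11]; [:: 18; 19; 15; 16; 17; 23; 24; 20; 21; 22; 3; 4; 0; 1; 2; 8; 9; 5; 6; 7; 13; 14; 10; 11; 12]; [:: 19; 15; 16; 17; 18; 24; 20; 21; 22; 23; 4; 0; 1; 2; 3; 9; 5; 6; 7; 8; 14; 10; 11; 12; 13]; [::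 20; 21; 22; 23; 24; 0; 1; 2; 3; 4; 5; 6; 7; 8; 9; 10; 11; 12; 13; 14; 15; 16; 17; 18; 19]; [:: 21; 22; 23; 24; 20; 1; 2; 3; 4; 0; 6; 7; 8; 9; 5; 11; 12; 13; 14; 10; 16; 17; 18; 19; 15]; [:: 22; 23; 24; 20; 21; 2; 3; 4; 0; 1; 7; 8; 9; 5; 6; 12; 13; 14; 10; 11; 17; 18; 19; 15; 16]; [:: 23; 24; 20; 21; 22; 3; 4; 0; 1; 2; 8; 9; 5; 6; 7; 13; 14; 10; 11; 12; 18; 19; 15; 16; 17]; [:: 24; 20; 21; 22; 23; 4; 0; 1; 2; 3; 9; 5; 6; 7; 8; 14; 10; 11; 12; 13; 19; 15; 16; 17; 18]]%N.
Definition mulTS : seq (seq nat) := [:: [:: 0; 0; 0; 0; 0; 0; 0; 0; 0; 0; 0; 0; 0; 0; 0; 0; 0; 0; 0; 0; 0; 0; 0; 0; 0]; [:: 0; 0; 0; 0; 0; 1; 1; 1; 1; 1; 2; 2; 2; 2; 2; 3; 3; 3; 3; 3; 4; 4; 4; 4; 4]; [:: 0; 0; 0; 0; 0; 2; 2; 2; 2; 2; 4; 4; 4; 4; 4; 1; 1; 1; 1; 1; 3; 3; 3; 3; 3]; [:: 0; 0; 0; 0; 0; 3; 3; 3; 3; 3; 1; 1; 1; 1; 1; 4; 4; 4; 4; 4; 2; 2; 2; 2; 2]; [:: 0; 0; 0; 0; 0; 4; 4; 4; 4; 4; 3; 3; 3; 3; 3; 2; 2; 2; 2; 2; 1; 1;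 1; 1; 1]; [:: 0; 1; 2; 3; 4; 5; 6; 7; 8; 9; 10; 11; 12; 13; 14; 15; 16; 17; 18; 19; 20; 21; 22; 23; 24]; [:: 0; 1; 2; 3; 4; 6; 7; 8; 9; 5; 12; 13; 14; 10; 11; 18; 19; 15; 16; 17; 24; 20; 21; 22; 23]; [:: 0; 1; 2; 3; 4; 7; 8; 9; 5; 6; 14; 10; 11; 12; 13; 16; 17; 18; 19; 15; 23; 24; 20; 21; 22]; [:: 0; 1; 2; 3; 4; 8; 9; 5; 6; 7; 11; 12; 13; 14; 10; 19; 15; 16; 17; 18; 22; 23; 24; 20; 21]; [:: 0; 1; 2; 3; 4; 9; 5; 6; 7; 8; 13; 14; 10; 11; 12; 17; 18; 19; 15; 16; 21; 22; 23; 24; 20]; [:: 0; 2; 4; 1; 3; 10; 12; 14; 11; 13; 20; 22; 24; 21; 23; 5; 7; 9; 6; 8; 15; 17; 19; 16; 18]; [:: 0; 2; 4; 1; 3; 11; 13; 10; 12; 14; 22; 24; 21; 23; 20; 8; 5; 7; 9; 6; 19; 16; 18; 15; 17]; [:: 0; 2; 4; 1; 3; 12; 14; 11; 13; 10; 24; 21; 23; 20; 22; 6; 8; 5; 7; 9; 18; 15; 17; 19; 16]; [:: 0; 2; 4; 1; 3; 13; 10; 12; 14; 11; 21; 23; 20; 22; 24; 9; 6; 8; 5; 7; 17; 19; 16; 18; 15]; [:: 0; 2; 4; 1; 3; 14; 11; 13; 10; 12; 23; 20; 22; 24; 21; 7; 9; 6; 8; 5; 16; 18; 15; 17; 19]; [::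 0; 3; 1; 4; 2; 15; 18; 16; 19; 17; 5; 8; 6; 9; 7; 20; 23; 21; 24; 22; 10; 13; 11; 14; 12]; [:: 0; 3; 1; 4; 2; 16; 19; 17; 15; 18; 7; 5; 8; 6; 9; 23; 21; 24; 22; 20; 14; 12; 10; 13; 11]; [:: 0; 3; 1; 4; 2; 17; 15; 18; 16; 19; 9; 7; 5; 8; 6; 21; 24; 22; 20; 23; 13; 11; 14; 12; 10]; [:: 0; 3; 1; 4; 2; 18; 16; 19; 17; 15; 6; 9; 7; 5; 8; 24; 22; 20; 23; 21; 12; 10; 13; 11; 14]; [:: 0; 3; 1; 4; 2; 19; 17; 15; 18; 16; 8; 6; 9; 7; 5; 22; 20; 23; 21; 24; 11; 14; 12; 10; 13]; [:: 0; 4; 3; 2; 1; 20; 24; 23; 22; 21; 15; 19; 18; 17; 16; 10; 14; 13; 12; 11; 5; 9; 8; 7; 6]; [:: 0; 4; 3; 2; 1; 21; 20; 24; 23; 22; 17; 16; 15; 19; 18; 13; 12; 11; 10; 14; 9; 8; 7; 6; 5]; [:: 0; 4; 3; 2; 1; 22; 21; 20; 24; 23; 19; 18; 17; 16; 15; 11; 10; 14; 13; 12; 8; 7; 6; 5; 9]; [:: 0; 4; 3; 2; 1; 23; 22; 21; 20; 24; 16; 15; 19; 18; 17; 14; 13; 12; 11; 10; 7; 6; 5; 9; 8]; [:: 0; 4; 3; 2; 1; 24; 23; 22; 21; 20; 18; 17; 16; 15; 19; 12; 11; 10; 14; 13; 6; 5; 9; 8; 7]]%N.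

Definition lk (T : seq (seq nat)) (a b : nat) : nat := nth 0%N (nth [::] T a) b.

Section Inst.
Local Open Scope ring_scope.

Definition phiZ (k : nat) : Z25 := inZp k.
Definition phiS (k : nat) : S5 := (inZp (k %/ 5), inZp (k %% 5)).

Lemma surjZ (x : Z25) : exists2 a, (a < 25)%N & phiZ a = x.
Proof. by exists (val x); [exact: ltn_ord | exact: valZpK]. Qed.

Lemma surjS (x : S5) : exists2 a, (a < 25)%N & phiS a = x.
Proof.
case: x => a b; exists (5 * val a + val b)%N.
  have Ha : (val a < 5)%N := ltn_ord a.
  have Hb : (val b < 5)%N := ltn_ord b.
  lia.
rewrite /phiS.
have Hb : (val b < 5)%N := ltn_ord b.
have -> : ((5 * val a + val b) %/ 5 = val a)%N by rewrite mulnC divnMDl // divn_small // addn0.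
have -> : ((5 * val a + val b) %% 5 = val b)%N by rewrite mulnC modnMDl modn_small.
by rewrite !valZpK.
Qed.

Definition chkZ (Vc : seq ctri) N k :=
  [&& ops_chk phiZ (lk addTZ) (lk mulTZ), inj_chk phiZ, cst_chk phiZ 1 5,
      local_chk (els_c phiZ) (phiZ 5) & all rng Vc] && [&& all (ptsc (lk mulTZ) 1) Vc, uniq Vc,
      all (nrmc (lk mulTZ) 1 5) Vc, lines_chkc (lk addTZ) (lk mulTZ) 1 5 Vc N & size Vc == k].

Definition chkS (Vc : seq ctri) N k :=
  [&& ops_chk phiS (lk addTS) (lk mulTS), inj_chk phiS, cst_chk phiS 5 1,
      local_chk (els_c phiS) (phiS 1) & all rng Vc] && [&& all (ptsc (lk mulTS) 5) Vc, uniq Vc,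
      all (nrmc (lk mulTS) 5 1) Vc, lines_chkc (lk addTS) (lk mulTS) 5 1 Vc N & size Vc == k].

Lemma mkZ Vc N k : chkZ Vc N k -> exists A, @proj_arc Z25 A k N.
Proof.
case/andP => /and5P [H1 H2 H3 H4 H5] /and5P [H6 H7 H8 H9 /eqP H10].
exact: (arc_codes H1 H2 H3 surjZ H4 H5 H6 H7 H8 H9 H10).
Qed.

Lemma mkS Vc N k : chkS Vc N k -> exists A, @proj_arc S5 A k N.
Proof.
case/andP => /and5P [H1 H2 H3 H4 H5] /and5P [H6 H7 H8 H9 /eqP H10].
exact: (arc_codes H1 H2 H3 surjS H4 H5 H6 H7 H8 H9 H10).
Qed.

Lemma arcZ425 : exists A, @proj_arc Z25 A 425 18.
Proof. apply: (@mkZ rz425); by vm_cast_no_check (erefl true). Qed.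
Lemma arcZ455 : exists A, @proj_arc Z25 A 455 19.
Proof. apply: (@mkZ rz455); by vm_cast_no_check (erefl true). Qed.
Lemma arcS425 : exists A, @proj_arc S5 A 425 18.
Proof. apply: (@mkS rs425); by vm_cast_no_check (erefl true). Qed.
Lemma arcS455 : exists A, @proj_arc S5 A 455 19.
Proof. apply: (@mkS rs455); by vm_cast_no_check (erefl true). Qed.
End Inst.

Theorem theorem3p10 :
  [/\ (exists A, @proj_arc Z25 A 425 18), (exists A, @proj_arc Z25 A 455 19),
      (exists A, @proj_arc S5 A 425 18) & (exists A, @proj_arc S5 A 455 19)].
Proof. split; [exact: arcZ425 | exact: arcZ455 | exact: arcS425 | exact: arcS455]. Qed.
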